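(* Let $X$ be a finite set and $N_X:X\times X\to\mathbb{R}$ a phylogenetic network. Then for all $x,x'\in X$, $$N_X(x,x')=\min\{U_X(x,x')\mid U_X\text{ a symmetric ultranetwork over }X\text{ with }U_X\geq N_X\text{ entrywise}\}.$$
   Context: A phylogenetic network over $X$ is a map $N_X:X\times X\to\mathbb{R}$ with $N_X(x,x')=N_X(x',x)$ and $\max\{N_X(x,x),N_X(x',x')\}\leq N_X(x,x')$ for all $x,x'\in X$. A symmetric ultranetwork over $X$ is a map $U_X:X\times X\to\mathbb{R}$ with $U_X(x,x')=U_X(x',x)$ and $U_X(x,x'')\leq\max\{U_X(x,x'),U_X(x',x'')\}$ for all $x,x',x''\in X$. *)

(* Defs.v *)
From mathcomp Require Import all_boot all_order all_algebra.
From mathcomp Require Import reals.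
Set Implicit Arguments. Unset Strict Implicit. Unset Printing Implicit Defensive.
Import Order.TTheory GRing.Theory Num.Theory.
Local Open Scope ring_scope.

Definition phylo_network (R : realType) (X : finType) (N : X -> X -> R) : Prop :=
  (forall x x', N x x' = N x' x) /\
  (forall x x', Num.max (N x x) (N x' x') <= N x x').

Definition sym_ultranetwork (R : realType) (X : finType) (U : X -> X -> R) : Prop :=
  (forall x x', U x x' = U x' x) /\
  (forall x x' x'', U x x'' <= Num.max (U x x') (U x' x'')).

Definition is_min (R : realType) (S : R -> Prop) (m : R) : Prop :=
  S m /\ (forall y, S y -> m <= y).

(* Main.v *)
Require Import Defs.
From mathcomp Require Import all_boot all_order all_algebra.
From mathcomp Require Import reals.
Import Order.TTheory GRing.Theory Num.Theory.
Local Open Scope ring_scope.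

Theorem mainTheorem7 (R : realType) (X : finType) (N : X -> X -> R) :
  phylo_network N ->
  forall x x' : X,
    is_min (fun r : R => exists U : X -> X -> R,
              sym_ultranetwork U /\ (forall y y', N y y' <= U y y') /\ r = U x x')
           (N x x').
Proof.
move=> [Nsym Ndiag] x x'; split; last first.
  by move=> r [U [_ [HU ->]]].
set c := N x x'.
set M := `|c| + \sum_(p : X * X) `|N p.1 p.2|.
have sum0 : 0 <= \sum_(p : X * X) `|N p.1 p.2| by apply: sumr_ge0.
have Mc : c <= M.
  by rewrite /M; apply: (le_trans (ler_norm c)); rewrite lerDl.
have MN : forall y y', N y y' <= M.
  move=> y y'; apply: (le_trans (ler_norm _)).
  rewrite /M (bigD1 (y, y')) //= addrCA.
  rewrite lerDl addr_ge0 //; apply: sumr_ge0 => *; exact: normr_ge0.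
pose inS y := (y == x) || (y == x').
exists (fun y y' => if inS y && inS y' then c else M).
split; [split|split].
- by move=> y y'; rewrite andbC.
- move=> a b d.
  case: ifP => Had.
    by rewrite le_max; case: ifP => _; [rewrite lexx | rewrite Mc].
  case: (boolP (inS a && inS b)) => Hab; case: (boolP (inS b && inS d)) => Hbd //=;
    try by rewrite le_max lexx ?orbT.
  by move: Hab Hbd Had => /andP[-> _] /andP[_ ->].
- move=> y y'; case: ifP => // /andP[].
  rewrite /inS /c => /orP[] /eqP -> /orP[] /eqP ->.
  + by apply: le_trans (Ndiag x x'); rewrite le_max lexx.
  + by [].
  + by rewrite Nsym.
  + by apply: le_trans (Ndiag x x'); rewrite le_max lexx orbT.
- by have -> : inS x && inS x' by rewrite /inS !eqxx ?orbT.
Qed.
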